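(* Let $h=z+\sum_{l\ge1}h_l(x)z^{-l}$ and $k=z^2+\sum_{l\ge1}k_l(x)z^{-l}$ satisfy the Riccati system $$h_x+hk=z^3+h_1h+(h_2+k_1),\qquad k_x+k^2=-h_1k+h\,(2k_1-h_2+z^3)-(h_3-2k_2).$$ Then all coefficients $h_j$ ($j\ge3$) and $k_j$ ($j\ge3$) are uniquely determined as differential polynomials (in $x$) in the four functions $h_1,h_2,k_1,k_2$; in particular $h_3=h_1^2-h_{1x}-k_2$. Conversely, for arbitrary smooth $h_1,h_2,k_1,k_2$ there is a unique such pair $(h,k)$. Hence $\mathcal Q^2_3$ is identified with the space of matrices $$\mathcal U(\lambda)=\begin{pmatrix}0&0&1\\ \lambda+h_2+k_1&h_1&0\\ 2k_2-h_3&\lambda+2k_1-h_2&-h_1\end{pmatrix},\qquad \lambda=z^3,$$ parametrized by $(h_1,h_2,k_1,k_2)$.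
   Context: These are the equations characterizing, in the coordinates $h=H^{(1)}$, $k=H^{(2)}$ on $\mathcal Q_2$ (space variable $x=t_2$), the subspace $\mathcal Q^2_3$ of integral curves of the central-system flow $X_2$ lying in $\mathcal S_3=\{H: X_3(H)=0,\ H^{(3)}=z^3\}$. Here $z$ is a formal variable and identities are identities of formal Laurent series, compared coefficient by coefficient in powers of $z$. *)

(* Defs.v *)
From Stdlib Require Import Reals ZArith.
From Coquelicot Require Import Coquelicot.

Open Scope R_scope.

Definition smooth (f : R -> R) : Prop := forall (n : nat) (x : R), ex_derive_n f n x.

(** Formal Laurent series in z whose coefficients are functions of x:
    [a n x] is the coefficient of z^n, evaluated at the point x. *)
Definition ser := Z -> R -> R.

(** h = z + sum_{l>=1} hc l z^{-l}  (hc 0 is ignored) *)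
Definition hser (hc : nat -> R -> R) : ser := fun n x =>
  if Z.eqb n 1 then 1 else if Z.leb n (-1) then hc (Z.to_nat (- n)) x else 0.

(** k = z^2 + sum_{l>=1} kc l z^{-l}  (kc 0 is ignored) *)
Definition kser (kc : nat -> R -> R) : ser := fun n x =>
  if Z.eqb n 2 then 1 else if Z.leb n (-1) then kc (Z.to_nat (- n)) x else 0.

Definition zpow (m : Z) : ser := fun n _ => if Z.eqb n m then 1 else 0.
Definition sconst (f : R -> R) : ser := fun n x => if Z.eqb n 0 then f x else 0.
Definition sadd (a b : ser) : ser := fun n x => a n x + b n x.
Definition sopp (a : ser) : ser := fun n x => - a n x.
Definition ssub (a b : ser) : ser := sadd a (sopp b).
Definition sscal (f : R -> R) (a : ser) : ser := fun n x => f x * a n x.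
Definition sderiv (a : ser) : ser := fun n x => Derive (a n) x.

Fixpoint csum (f : nat -> R) (m : nat) : R :=
  match m with O => 0 | S m' => csum f m' + f m' end.

(** Product of two Laurent series [a], [b] whose coefficients vanish in
    degrees > da, resp. > db: the coefficient of z^n is the (finite) sum
    of a_i b_{n-i} over n - db <= i <= da. *)
Definition smul (da db : Z) (a b : ser) : ser := fun n x =>
  csum (fun t => a (da - Z.of_nat t)%Z x * b (n - da + Z.of_nat t)%Z x)
       (Z.to_nat (da + db - n + 1)).

Definition ser_eq (a b : ser) : Prop := forall n x, a n x = b n x.

(** The Riccati system
      h_x + h k = z^3 + h_1 h + (h_2 + k_1),
      k_x + k^2 = - h_1 k + h (2 k_1 - h_2 + z^3) - (h_3 - 2 k_2),
    compared coefficient by coefficient in powers of z.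
    (deg h = 1, deg k = 2, deg (2k_1 - h_2 + z^3) = 3.) *)
Definition riccati (hc kc : nat -> R -> R) : Prop :=
  let h := hser hc in
  let k := kser kc in
  ser_eq (sadd (sderiv h) (smul 1 2 h k))
         (sadd (zpow 3) (sadd (sscal (hc 1%nat) h)
               (sconst (fun x => hc 2%nat x + kc 1%nat x))))
  /\
  ser_eq (sadd (sderiv k) (smul 2 2 k k))
         (ssub (sadd (sopp (sscal (hc 1%nat) k))
                     (smul 1 3 h (sadd (sconst (fun x => 2 * kc 1%nat x - hc 2%nat x))
                                       (zpow 3))))
               (sconst (fun x => hc 3%nat x - 2 * kc 2%nat x))).

(** Differential polynomials in the four generators h1, h2, k1, k2
    (with real coefficients), as syntax: [DVar g m] is the m-th
    x-derivative of the generator g. *)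
Inductive gen : Type := G_h1 | G_h2 | G_k1 | G_k2.

Inductive dpoly : Type :=
  | DVar (g : gen) (m : nat)
  | DConst (c : R)
  | DAdd (p q : dpoly)
  | DMul (p q : dpoly).

Definition gens (h1 h2 k1 k2 : R -> R) (g : gen) : R -> R :=
  match g with G_h1 => h1 | G_h2 => h2 | G_k1 => k1 | G_k2 => k2 end.

Fixpoint deval (u : gen -> R -> R) (p : dpoly) (x : R) : R :=
  match p with
  | DVar g m => Derive_n (u g) m x
  | DConst c => c
  | DAdd p q => deval u p x + deval u q x
  | DMul p q => deval u p x * deval u q x
  end.

Definition is_solution (hc kc : nat -> R -> R) : Prop :=
  (forall l, (1 <= l)%nat -> smooth (hc l) /\ smooth (kc l)) /\ riccati hc kc.

(* Main.v *)
Require Import Defs.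
From Stdlib Require Import Reals ZArith Lia Lra.
From Coquelicot Require Import Coquelicot.
Open Scope R_scope.

Fixpoint dD (p : dpoly) : dpoly := match p with
 | DVar g m => DVar g (S m)
 | DConst _ => DConst 0
 | DAdd p q => DAdd (dD p) (dD q)
 | DMul p q => DAdd (DMul (dD p) q) (DMul p (dD q)) end.

Fixpoint dDn (n : nat) (p : dpoly) : dpoly := match n with O => p | S n => dD (dDn n p) end.

Lemma ev_deriv u (Hu : forall g, smooth (u g)) p x :
  ex_derive (deval u p) x /\ Derive (deval u p) x = deval u (dD p) x.
Proof.
  revert x; induction p as [g m|c|p IHp q IHq|p IHp q IHq]; intro x.
  - split; [exact (Hu g (S m) x)| reflexivity].
  - split; [exact (@ex_derive_const R_AbsRing R_NormedModule c x)| exact (Derive_const c x)].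
  - destruct (IHp x) as [Ep Dp]; destruct (IHq x) as [Eq Dq]. split.
    + exact (@ex_derive_plus R_AbsRing R_NormedModule (deval u p) (deval u q) x Ep Eq).
    + simpl. rewrite <- Dp, <- Dq. apply (Derive_plus (deval u p) (deval u q) x Ep Eq).
  - destruct (IHp x) as [Ep Dp]; destruct (IHq x) as [Eq Dq]. split.
    + apply (ex_derive_mult (deval u p) (deval u q) x Ep Eq).
    + simpl. rewrite <- Dp, <- Dq. apply (Derive_mult (deval u p) (deval u q) x Ep Eq).
Qed.

Lemma ev_Derive u (Hu : forall g, smooth (u g)) p x :
  Derive (deval u p) x = deval u (dD p) x.
Proof. apply ev_deriv; auto. Qed.

Lemma ev_Derive_n u (Hu : forall g, smooth (u g)) n p x :
  Derive_n (deval u p) n x = deval u (dDn n p) x.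
Proof.
  revert x; induction n; intro x; [reflexivity|].
  simpl. rewrite (Derive_ext _ (deval u (dDn n p)) x IHn). apply ev_Derive; auto.
Qed.

Lemma ev_smooth u (Hu : forall g, smooth (u g)) p : smooth (deval u p).
Proof.
  intros n x; destruct n; [exact I|]. simpl.
  apply (ex_derive_ext (deval u (dDn n p))).
  - intro t; symmetry; apply ev_Derive_n; auto.
  - apply ev_deriv; auto.
Qed.

Fixpoint dcsum (f : nat -> dpoly) (m : nat) : dpoly :=
  match m with O => DConst 0 | S m' => DAdd (dcsum f m') (f m') end.
Definition dconv (H K : nat -> dpoly) (M : nat) : dpoly :=
  dcsum (fun t => DMul (H (S t)) (K (M - t)%nat)) M.
Definition dsub p q := DAdd p (DMul (DConst (-1)) q).
Definition Aexp (H K : nat -> dpoly) (M : nat) : dpoly :=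
  dsub (dsub (DMul (H 1%nat) (H (S M))) (dD (H (S M)))) (dconv H K M).
Definition Bexp (H K : nat -> dpoly) (M : nat) : dpoly :=
  dsub (DAdd (DAdd (dD (K (S M))) (dconv K K M)) (DMul (H 1%nat) (K (S M))))
       (DMul (dsub (DMul (DConst 2) (K 1%nat)) (H 2%nat)) (H (S M))).
Definition kexp H K m := DMul (DConst (/3)) (dsub (Aexp H K (S m)) (Bexp H K m)).
Definition upd (f : nat -> dpoly) (i : nat) (v : dpoly) := fun j => if Nat.eqb j i then v else f j.
Definition Hb (j : nat) := match j with 1%nat => DVar G_h1 0 | 2%nat => DVar G_h2 0 | _ => DConst 0 end.
Definition Kb (j : nat) := match j with 1%nat => DVar G_k1 0 | 2%nat => DVar G_k2 0 | _ => DConst 0 end.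
Fixpoint tabs (m : nat) : (nat -> dpoly) * (nat -> dpoly) :=
  match m with
  | O => (upd Hb 3 (dsub (Aexp Hb Kb 0) (Kb 2)), Kb)
  | S m => let (H, K) := tabs m in
           let k := kexp H K m in
           (upd H (m+4) (dsub (Aexp H K (S m)) k), upd K (m+3) k)
  end.
Definition P j := fst (tabs j) j.
Definition Q j := snd (tabs j) j.

Lemma tabs_stab m d : (forall i, (i <= m+3)%nat -> fst (tabs (d+m)) i = fst (tabs m) i) /\
                      (forall i, (i <= m+2)%nat -> snd (tabs (d+m)) i = snd (tabs m) i).
Proof.
  induction d as [|d [IH1 IH2]]; [split; reflexivity|].
  simpl. destruct (tabs (d+m)) as [H K] eqn:E. simpl in IH1, IH2. split; intros i Hi; cbn [fst snd]; unfold upd.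
  - destruct (Nat.eqb_spec i (d+m+4)); [lia| auto].
  - destruct (Nat.eqb_spec i (d+m+3)); [lia| auto].
Qed.

Lemma tabsP m j : (j <= m+3)%nat -> fst (tabs m) j = P j.
Proof.
  intro Hj; unfold P. destruct (Nat.le_ge_cases m j) as [h|h].
  - replace j with ((j-m)+m)%nat at 2 by lia. symmetry; apply (tabs_stab m (j-m)); lia.
  - replace m with ((m-j)+j)%nat at 1 by lia. apply (tabs_stab j (m-j)); lia.
Qed.
Lemma tabsQ m j : (j <= m+2)%nat -> snd (tabs m) j = Q j.
Proof.
  intro Hj; unfold Q. destruct (Nat.le_ge_cases m j) as [h|h].
  - replace j with ((j-m)+m)%nat at 2 by lia. symmetry; apply (tabs_stab m (j-m)); lia.
  - replace m with ((m-j)+j)%nat at 1 by lia. apply (tabs_stab j (m-j)); lia.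
Qed.

Lemma dcsum_ext f g m : (forall t, (t < m)%nat -> f t = g t) -> dcsum f m = dcsum g m.
Proof. induction m; intros H; simpl; [reflexivity|]. rewrite IHm, H; auto. Qed.

Lemma Aexp_ext H K H' K' M : (forall i, (i <= S M)%nat -> H i = H' i) ->
  (forall i, (i <= M)%nat -> K i = K' i) -> Aexp H K M = Aexp H' K' M.
Proof.
  intros E1 E2. unfold Aexp, dconv. rewrite !E1 by lia.
  rewrite (dcsum_ext _ (fun t => DMul (H' (S t)) (K' (M - t)%nat))); [reflexivity|].
  intros t Ht. rewrite E1, E2 by lia. reflexivity.
Qed.
Lemma Bexp_ext H K H' K' M : (forall i, (i <= S (S M))%nat -> H i = H' i) ->
  (forall i, (i <= S M)%nat -> K i = K' i) -> Bexp H K M = Bexp H' K' M.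
Proof.
  intros E1 E2. unfold Bexp, dconv. rewrite !E1, !E2 by lia.
  rewrite (dcsum_ext _ (fun t => DMul (K' (S t)) (K' (M - t)%nat))); [reflexivity|].
  intros t Ht. rewrite !E2 by lia. reflexivity.
Qed.

Lemma P1 : P 1 = DVar G_h1 0. Proof. reflexivity. Qed.
Lemma P2 : P 2 = DVar G_h2 0. Proof. reflexivity. Qed.
Lemma Q1 : Q 1 = DVar G_k1 0. Proof. reflexivity. Qed.
Lemma Q2 : Q 2 = DVar G_k2 0. Proof. reflexivity. Qed.
Lemma P3 : P 3 = dsub (Aexp P Q 0) (Q 2). Proof. reflexivity. Qed.

Lemma Pstep m : Q (m+3)%nat = kexp P Q m /\ P (m+4)%nat = dsub (Aexp P Q (S m)) (Q (m+3)%nat).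
Proof.
  assert (HQ : Q (m+3)%nat = kexp (fst (tabs m)) (snd (tabs m)) m).
  { rewrite <- (tabsQ (S m)) by lia. simpl. destruct (tabs m) as [H K]. simpl.
    unfold upd. rewrite Nat.eqb_refl. reflexivity. }
  assert (HK : kexp (fst (tabs m)) (snd (tabs m)) m = kexp P Q m).
  { unfold kexp. rewrite (Aexp_ext _ _ P Q), (Bexp_ext _ _ P Q); auto;
    intros; (apply tabsP || apply tabsQ); lia. }
  split; [congruence|].
  rewrite <- (tabsP (S m)) by lia. simpl. destruct (tabs m) as [H K] eqn:E. simpl.
  unfold upd. rewrite Nat.eqb_refl. cbn [fst snd] in *. rewrite HQ, HK.
  rewrite (Aexp_ext H K P Q); [reflexivity| |]; intros;
  [rewrite <- (tabsP m) by lia | rewrite <- (tabsQ m) by lia]; rewrite E; reflexivity.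
Qed.

Definition conv (f g : nat -> R -> R) (M : nat) (x : R) : R :=
  csum (fun t => f (S t) x * g (M - t)%nat x) M.

Lemma csum_ext f g m : (forall t, (t < m)%nat -> f t = g t) -> csum f m = csum g m.
Proof. induction m; intros H; simpl; [reflexivity|]. rewrite IHm, H; auto. Qed.
Lemma csum_front f m : csum f (S m) = f O + csum (fun t => f (S t)) m.
Proof. induction m; [simpl; ring|]. change (csum f (S (S m))) with (csum f (S m) + f (S m)). rewrite IHm. simpl. ring. Qed.
Lemma csum_zero m : csum (fun _ => 0) m = 0.
Proof. induction m; simpl; [reflexivity|]. rewrite IHm; ring. Qed.

Section S.
Variable hc kc : nat -> R -> R.
Lemma hN n N x : n = (- Z.of_nat N)%Z -> (1 <= N)%nat -> hser hc n x = hc N x.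
Proof. intros -> ?. unfold hser. replace (Z.eqb _ 1) with false by (symmetry; apply Z.eqb_neq; lia).
  replace (Z.leb _ (-1)) with true by (symmetry; apply Z.leb_le; lia). f_equal. lia. Qed.
Lemma kN n N x : n = (- Z.of_nat N)%Z -> (1 <= N)%nat -> kser kc n x = kc N x.
Proof. intros -> ?. unfold kser. replace (Z.eqb _ 2) with false by (symmetry; apply Z.eqb_neq; lia).
  replace (Z.leb _ (-1)) with true by (symmetry; apply Z.leb_le; lia). f_equal. lia. Qed.
Lemma h1 n x : n = 1%Z -> hser hc n x = 1.
Proof. intros ->. reflexivity. Qed.
Lemma k2 n x : n = 2%Z -> kser kc n x = 1.
Proof. intros ->. reflexivity. Qed.
Lemma h0 n x : (0 <= n)%Z -> n <> 1%Z -> hser hc n x = 0.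
Proof. intros. unfold hser. replace (Z.eqb _ 1) with false by (symmetry; apply Z.eqb_neq; lia).
  replace (Z.leb _ (-1)) with false by (symmetry; apply Z.leb_gt; lia). reflexivity. Qed.
Lemma k0 n x : (0 <= n)%Z -> n <> 2%Z -> kser kc n x = 0.
Proof. intros. unfold kser. replace (Z.eqb _ 2) with false by (symmetry; apply Z.eqb_neq; lia).
  replace (Z.leb _ (-1)) with false by (symmetry; apply Z.leb_gt; lia). reflexivity. Qed.
Lemma zp0 m n x : n <> m -> zpow m n x = 0.
Proof. intros. unfold zpow. replace (Z.eqb _ _) with false by (symmetry; apply Z.eqb_neq; lia). reflexivity. Qed.
Lemma zp1 m n x : n = m -> zpow m n x = 1.
Proof. intros ->. unfold zpow. rewrite Z.eqb_refl. reflexivity. Qed.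
Lemma sc0 f n x : n <> 0%Z -> sconst f n x = 0.
Proof. intros. unfold sconst. replace (Z.eqb _ _) with false by (symmetry; apply Z.eqb_neq; lia). reflexivity. Qed.
Lemma sc1 f n x : n = 0%Z -> sconst f n x = f x.
Proof. intros ->. reflexivity. Qed.
Lemma dh0 n x : (0 <= n)%Z -> Derive (hser hc n) x = 0.
Proof. intros. rewrite (Derive_ext _ (fun _ => hser hc n 0)). apply Derive_const.
  intro t. unfold hser. replace (Z.leb _ (-1)) with false by (symmetry; apply Z.leb_gt; lia). reflexivity. Qed.
Lemma dk0 n x : (0 <= n)%Z -> Derive (kser kc n) x = 0.
Proof. intros. rewrite (Derive_ext _ (fun _ => kser kc n 0)). apply Derive_const.
  intro t. unfold kser. replace (Z.leb _ (-1)) with false by (symmetry; apply Z.leb_gt; lia). reflexivity. Qed.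
Lemma dhN N x : Derive (hser hc (- Z.of_nat (S N))%Z) x = Derive (hc (S N)) x.
Proof. apply Derive_ext. intro; apply hN; [reflexivity|lia]. Qed.
Lemma dkN N x : Derive (kser kc (- Z.of_nat (S N))%Z) x = Derive (kc (S N)) x.
Proof. apply Derive_ext. intro; apply kN; [reflexivity|lia]. Qed.

Ltac tryN n x M t :=
  first [ rewrite (hN n (S M) x) by lia
        | rewrite (hN n (S (S M)) x) by lia | rewrite (hN n (S (S (S M))) x) by lia
        | rewrite (hN n (S (S (S (S M)))) x) by lia
        | rewrite (hN n (S t) x) by lia | rewrite (hN n (M - t)%nat x) by lia ].
Ltac tryK n x M t :=
  first [ rewrite (kN n (S M) x) by lia
        | rewrite (kN n (S (S M)) x) by lia | rewrite (kN n (S (S (S M))) x) by lia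
        | rewrite (kN n (S (S (S (S M)))) x) by lia
        | rewrite (kN n (S t) x) by lia | rewrite (kN n (M - t)%nat x) by lia ].
Ltac rwall M t := repeat match goal with
  | |- context [hser hc ?n ?x] =>
     first [ rewrite (h1 n x) by lia | rewrite (h0 n x) by lia | tryN n x M t ]
  | |- context [kser kc ?n ?x] =>
     first [ rewrite (k2 n x) by lia | rewrite (k0 n x) by lia | tryK n x M t ]
  | |- context [zpow ?m ?n ?x] =>
     first [ rewrite (zp1 m n x) by lia | rewrite (zp0 m n x) by lia ]
  | |- context [sconst ?f ?n ?x] =>
     first [ rewrite (sc1 f n x) by lia | rewrite (sc0 f n x) by lia ]
  end.

Lemma L1 M x : sadd (sderiv (hser hc)) (smul 1 2 (hser hc) (kser kc)) (- Z.of_nat (S M))%Z x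
  = Derive (hc (S M)) x + (kc (S (S M)) x + conv hc kc M x + hc (S (S (S M))) x).
Proof.
  unfold sadd, sderiv, smul. rewrite dhN. f_equal.
  replace (Z.to_nat _) with (S (S (S (S (S M))))) by lia.
  rewrite csum_front, csum_front. cbn [csum].
  rwall M M. unfold conv.
  rewrite (csum_ext _ (fun t => hc (S t) x * kc (M - t)%nat x)). ring.
  intros t Ht. rwall M t. ring.
Qed.

Lemma R1 M x : sadd (zpow 3) (sadd (sscal (hc 1%nat) (hser hc))
       (sconst (fun x => hc 2%nat x + kc 1%nat x))) (- Z.of_nat (S M))%Z x = hc 1%nat x * hc (S M) x.
Proof. unfold sadd, sscal. rwall M M. ring. Qed.

Lemma L2 M x : sadd (sderiv (kser kc)) (smul 2 2 (kser kc) (kser kc)) (- Z.of_nat (S M))%Z x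
  = Derive (kc (S M)) x + (2 * kc (S (S (S M))) x + conv kc kc M x).
Proof.
  unfold sadd, sderiv, smul. rewrite dkN. f_equal.
  replace (Z.to_nat _) with (S (S (S (S (S (S M)))))) by lia.
  rewrite csum_front, csum_front, csum_front. cbn [csum].
  rwall M M. unfold conv.
  rewrite (csum_ext _ (fun t => kc (S t) x * kc (M - t)%nat x)). ring.
  intros t Ht. rwall M t. ring.
Qed.

Lemma R2 M x : ssub (sadd (sopp (sscal (hc 1%nat) (kser kc)))
                     (smul 1 3 (hser hc) (sadd (sconst (fun x => 2 * kc 1%nat x - hc 2%nat x))
                                       (zpow 3))))
               (sconst (fun x => hc 3%nat x - 2 * kc 2%nat x)) (- Z.of_nat (S M))%Z x
  = - (hc 1%nat x * kc (S M) x) + (hc (S M) x * (2 * kc 1%nat x - hc 2%nat x) + hc (S (S (S (S M)))) x).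
Proof.
  unfold ssub, sadd, sopp, sscal, smul.
  replace (Z.to_nat _) with (S (S (S (S (S (S M)))))) by lia.
  rewrite csum_front, csum_front. cbn [csum].
  rwall M M.
  rewrite (csum_ext _ (fun t => 0)). rewrite csum_zero. ring.
  intros t Ht. rwall M t. ring.
Qed.

Definition RE1 M x := Derive (hc (S M)) x + (kc (S (S M)) x + conv hc kc M x + hc (S (S (S M))) x)
   = hc 1%nat x * hc (S M) x.
Definition RE2 M x := Derive (kc (S M)) x + (2 * kc (S (S (S M))) x + conv kc kc M x)
   = - (hc 1%nat x * kc (S M) x) + (hc (S M) x * (2 * kc 1%nat x - hc 2%nat x) + hc (S (S (S (S M)))) x).

Lemma ric_fwd : riccati hc kc -> forall M x, RE1 M x /\ RE2 M x.
Proof.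
  intros [E1 E2] M x. unfold RE1, RE2. rewrite <- L1, <- R1, <- L2, <- R2. split; [apply E1|apply E2].
Qed.

Lemma ric_bwd : (forall M x, RE1 M x /\ RE2 M x) -> riccati hc kc.
Proof.
  intros HE. split; intros n x.
  - destruct (Z_lt_le_dec n 0) as [Hn|Hn].
    + replace n with (- Z.of_nat (S (Z.to_nat (-n) - 1)))%Z by lia.
      rewrite L1, R1. apply HE.
    + unfold sadd, sderiv, sscal, smul. rewrite dh0 by lia.
      assert (n = 0 \/ n = 1 \/ n = 2 \/ n = 3 \/ 4 <= n)%Z as [->|[->|[->|[->|H4]]]] by lia;
        try (simpl; rwall O O; ring).
      replace (Z.to_nat (1 + 2 - n + 1)) with O by lia. simpl csum. rwall O O. ring.
  - destruct (Z_lt_le_dec n 0) as [Hn|Hn].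
    + replace n with (- Z.of_nat (S (Z.to_nat (-n) - 1)))%Z by lia.
      rewrite L2, R2. apply HE.
    + unfold ssub, sadd, sopp, sderiv, sscal, smul. rewrite dk0 by lia.
      assert (n = 0 \/ n = 1 \/ n = 2 \/ n = 3 \/ n = 4 \/ 5 <= n)%Z as [->|[->|[->|[->|[->|H4]]]]] by lia;
        try (simpl; rwall O O; ring).
      replace (Z.to_nat (2 + 2 - n + 1)) with O by lia.
      replace (Z.to_nat (1 + 3 - n + 1)) with O by lia. simpl csum. rwall O O. ring.
Qed.
End S.

Lemma ev_dcsum u f m x : deval u (dcsum f m) x = csum (fun t => deval u (f t) x) m.
Proof. induction m; simpl; [reflexivity|]. rewrite IHm. reflexivity. Qed.

Section E.
Variables (u : gen -> R -> R) (Hu : forall g, smooth (u g)) (hc kc : nat -> R -> R) (H K : nat -> dpoly).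

Lemma ev_Aexp M x :
  (forall i, (1 <= i <= S M)%nat -> forall x, hc i x = deval u (H i) x) ->
  (forall i, (1 <= i <= M)%nat -> forall x, kc i x = deval u (K i) x) ->
  deval u (Aexp H K M) x = hc 1%nat x * hc (S M) x - Derive (hc (S M)) x - conv hc kc M x.
Proof.
  intros EH EK. unfold Aexp, dsub, dconv. simpl. rewrite ev_dcsum.
  rewrite (Derive_ext _ (deval u (H (S M))) x) by (apply EH; lia).
  rewrite <- (ev_Derive u Hu). rewrite !(EH 1%nat), (EH (S M)) by lia. unfold conv.
  rewrite (csum_ext (fun t => hc (S t) x * kc (M - t)%nat x)
                    (fun t => deval u (DMul (H (S t)) (K (M - t)%nat)) x)). ring.
  intros t Ht. simpl. rewrite EH, EK by lia. reflexivity.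
Qed.

Lemma ev_Bexp M x :
  (forall i, (1 <= i <= S (S M))%nat -> forall x, hc i x = deval u (H i) x) ->
  (forall i, (1 <= i <= S M)%nat -> forall x, kc i x = deval u (K i) x) ->
  deval u (Bexp H K M) x = Derive (kc (S M)) x + conv kc kc M x + hc 1%nat x * kc (S M) x
     - (2 * kc 1%nat x - hc 2%nat x) * hc (S M) x.
Proof.
  intros EH EK. unfold Bexp, dsub, dconv. simpl. rewrite ev_dcsum.
  rewrite (Derive_ext _ (deval u (K (S M))) x) by (apply EK; lia).
  rewrite <- (ev_Derive u Hu). rewrite (EH 1%nat), (EH 2%nat), (EH (S M)), (EK 1%nat), (EK (S M)) by lia.
  unfold conv.
  rewrite (csum_ext (fun t => kc (S t) x * kc (M - t)%nat x)
                    (fun t => deval u (DMul (K (S t)) (K (M - t)%nat)) x)). ring.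
  intros t Ht. simpl. rewrite !EK by lia. reflexivity.
Qed.
End E.

Section M.
Variables (u : gen -> R -> R) (Hu : forall g, smooth (u g)) (hc kc : nat -> R -> R)
  (RE : forall M x, RE1 hc kc M x /\ RE2 hc kc M x)
  (G1 : forall x, hc 1%nat x = deval u (P 1) x) (G2 : forall x, hc 2%nat x = deval u (P 2) x)
  (G3 : forall x, kc 1%nat x = deval u (Q 1) x) (G4 : forall x, kc 2%nat x = deval u (Q 2) x).

Definition INV m := (forall i, (1 <= i <= m+3)%nat -> forall x, hc i x = deval u (P i) x) /\
                          (forall i, (1 <= i <= m+2)%nat -> forall x, kc i x = deval u (Q i) x).

Lemma base : INV 0.
Proof.
  split; intros i Hi x; (destruct i as [|[|[|[|i]]]]; [lia| | | |lia]); try (apply G1); try (apply G2);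
   try (apply G3); try (apply G4); try lia.
      rewrite P3; unfold dsub; cbn [deval];
      rewrite (ev_Aexp u Hu hc kc P Q 0 x) by (intros j Hj; first [exfalso; lia | assert (j = 1%nat) as -> by lia; apply G1]);
      rewrite <- G4; destruct (RE O x) as [R1 _]; unfold RE1, conv in R1; cbn [csum] in R1;
      unfold conv; cbn [csum]; lra.
Qed.

Lemma step m : INV m -> INV (S m).
Proof.
  intros [IH1 IH2].
      assert (Ea : forall x, deval u (Aexp P Q (S m)) x = hc 1%nat x * hc (S (S m)) x
                   - Derive (hc (S (S m))) x - conv hc kc (S m) x).
      { intro x; apply (ev_Aexp u Hu hc kc P Q (S m) x); intros; [apply IH1|apply IH2]; lia. }
      assert (Eb : forall x, deval u (Bexp P Q m) x = Derive (kc (S m)) x + conv kc kc m x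
                   + hc 1%nat x * kc (S m) x - (2 * kc 1%nat x - hc 2%nat x) * hc (S m) x).
      { intro x; apply (ev_Bexp u Hu hc kc P Q m x); intros; [apply IH1|apply IH2]; lia. }
      destruct (Pstep m) as [SQ SP].
      assert (Ek : forall x, kc (m+3)%nat x = deval u (Q (m+3)%nat) x).
      { intro x. rewrite SQ. unfold kexp, dsub. cbn [deval]. rewrite Ea, Eb.
        destruct (RE (S m) x) as [R1 _]. destruct (RE m x) as [_ R2]. unfold RE1 in R1. unfold RE2 in R2.
        replace (m+3)%nat with (S (S (S m))) by lia. lra. }
      split; intros i Hi x.
      + destruct (Nat.eq_dec i (m+4)) as [->|Hne]; [|apply IH1; lia].
        rewrite SP. unfold dsub. cbn [deval].
        rewrite <- Ek, Ea.
        destruct (RE (S m) x) as [R1 _]. unfold RE1 in R1.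
        replace (m+3)%nat with (S (S (S m))) by lia. replace (m+4)%nat with (S (S (S (S m)))) by lia.
        lra.
      + destruct (Nat.eq_dec i (m+3)) as [->|Hne]; [apply Ek|apply IH2; lia].
Qed.
End M.

Lemma main_aux u (Hu : forall g, smooth (u g)) hc kc : riccati hc kc ->
  (forall x, hc 1%nat x = deval u (P 1) x) -> (forall x, hc 2%nat x = deval u (P 2) x) ->
  (forall x, kc 1%nat x = deval u (Q 1) x) -> (forall x, kc 2%nat x = deval u (Q 2) x) ->
  forall i, (1 <= i)%nat -> forall x,
   hc i x = deval u (P i) x /\ kc i x = deval u (Q i) x.
Proof.
  intros Hr G1 G2 G3 G4. pose proof (ric_fwd hc kc Hr) as RE.
  assert (IND : forall m, INV u hc kc m).
  { induction m as [|m IH]; [apply base| apply step]; auto. }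
  intros i Hi x. split; [apply (proj1 (IND i))|apply (proj2 (IND i))]; lia.
Qed.

Lemma main_unique hc kc : is_solution hc kc ->
  forall i, (1 <= i)%nat -> forall x,
   hc i x = deval (gens (hc 1%nat) (hc 2%nat) (kc 1%nat) (kc 2%nat)) (P i) x /\
   kc i x = deval (gens (hc 1%nat) (hc 2%nat) (kc 1%nat) (kc 2%nat)) (Q i) x.
Proof.
  intros [Hs Hr]. apply main_aux; [| exact Hr | | | |].
  - intro g; destruct g; cbn [gens].
    + exact (proj1 (Hs 1%nat ltac:(lia))).
    + exact (proj1 (Hs 2%nat ltac:(lia))).
    + exact (proj2 (Hs 1%nat ltac:(lia))).
    + exact (proj2 (Hs 2%nat ltac:(lia))).
  - intro x; rewrite P1; reflexivity.
  - intro x; rewrite P2; reflexivity.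
  - intro x; rewrite Q1; reflexivity.
  - intro x; rewrite Q2; reflexivity.
Qed.

Lemma RE_tables u (Hu : forall g, smooth (u g)) hc kc
  (EH : forall i x, hc i x = deval u (P i) x) (EK : forall i x, kc i x = deval u (Q i) x) :
  forall M x, RE1 hc kc M x /\ RE2 hc kc M x.
Proof.
  assert (Ea : forall m x, deval u (Aexp P Q (S m)) x = hc 1%nat x * hc (S (S m)) x
                   - Derive (hc (S (S m))) x - conv hc kc (S m) x).
  { intros m x; apply (ev_Aexp u Hu hc kc P Q (S m) x); intros; auto. }
  assert (Eb : forall m x, deval u (Bexp P Q m) x = Derive (kc (S m)) x + conv kc kc m x
                   + hc 1%nat x * kc (S m) x - (2 * kc 1%nat x - hc 2%nat x) * hc (S m) x).
  { intros m x; apply (ev_Bexp u Hu hc kc P Q m x); intros; auto. }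
  assert (S1 : forall m x, RE1 hc kc (S m) x /\ RE2 hc kc m x).
  { intros m x. destruct (Pstep m) as [SQ SP].
    assert (Hk : kc (S (S (S m))) x = / 3 * (deval u (Aexp P Q (S m)) x + -1 * deval u (Bexp P Q m) x)).
    { replace (S (S (S m))) with (m+3)%nat by lia. rewrite EK, SQ. reflexivity. }
    assert (Hh : hc (S (S (S (S m)))) x = deval u (Aexp P Q (S m)) x + -1 * kc (S (S (S m))) x).
    { replace (S (S (S (S m)))) with (m+4)%nat by lia. rewrite EH, SP.
      replace (S (S (S m))) with (m+3)%nat by lia. rewrite EK. reflexivity. }
    rewrite Ea, Eb in Hk. rewrite Ea in Hh. unfold RE1, RE2. split; lra. }
  intros [|m] x; [|split; [apply (S1 m x)|apply (S1 (S m) x)]].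
  split; [|apply (S1 0%nat x)].
  unfold RE1. rewrite (EH 3%nat), P3. unfold dsub. cbn [deval].
  rewrite (ev_Aexp u Hu hc kc P Q 0 x) by (intros; auto). rewrite <- EK.
  unfold conv. cbn [csum]. lra.
Qed.

Theorem mainTheorem12 :
  (exists P Q : nat -> dpoly,
     forall hc kc : nat -> R -> R, is_solution hc kc ->
       forall j : nat, (3 <= j)%nat -> forall x : R,
         hc j x = deval (gens (hc 1%nat) (hc 2%nat) (kc 1%nat) (kc 2%nat)) (P j) x /\
         kc j x = deval (gens (hc 1%nat) (hc 2%nat) (kc 1%nat) (kc 2%nat)) (Q j) x)
  /\
  (forall hc kc : nat -> R -> R, is_solution hc kc ->
     forall x : R, hc 3%nat x = (hc 1%nat x) ^ 2 - Derive (hc 1%nat) x - kc 2%nat x)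
  /\
  (forall h1 h2 k1 k2 : R -> R,
     smooth h1 -> smooth h2 -> smooth k1 -> smooth k2 ->
     exists hc kc : nat -> R -> R,
       is_solution hc kc /\
       hc 1%nat = h1 /\ hc 2%nat = h2 /\ kc 1%nat = k1 /\ kc 2%nat = k2 /\
       forall hc' kc' : nat -> R -> R,
         is_solution hc' kc' ->
         hc' 1%nat = h1 -> hc' 2%nat = h2 -> kc' 1%nat = k1 -> kc' 2%nat = k2 ->
         forall l : nat, (1 <= l)%nat -> forall x : R,
           hc' l x = hc l x /\ kc' l x = kc l x).
Proof.
  split; [|split].
  - exists P, Q. intros hc kc Hs j Hj x. apply main_unique; auto; lia.
  - intros hc kc [Hs Hr] x. destruct (ric_fwd hc kc Hr 0 x) as [R _].
    unfold RE1, conv in R. cbn [csum] in R. lra.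
  - intros h1 h2 k1 k2 s1 s2 s3 s4.
    assert (Hu : forall g, smooth (gens h1 h2 k1 k2 g)) by (destruct g; assumption).
    exists (fun i => deval (gens h1 h2 k1 k2) (P i)), (fun i => deval (gens h1 h2 k1 k2) (Q i)).
    assert (Sol : is_solution (fun i => deval (gens h1 h2 k1 k2) (P i))
                              (fun i => deval (gens h1 h2 k1 k2) (Q i))).
    { split.
      - intros l _; split; apply ev_smooth; auto.
      - apply ric_bwd. apply (RE_tables (gens h1 h2 k1 k2) Hu); reflexivity. }
    split; [exact Sol|].
    split; [rewrite P1; reflexivity|]. split; [rewrite P2; reflexivity|].
    split; [rewrite Q1; reflexivity|]. split; [rewrite Q2; reflexivity|].
    intros hc' kc' Hs' e1 e2 e3 e4 l Hl x.
    destruct (main_unique hc' kc' Hs' l Hl x) as [A B].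
    rewrite e1, e2, e3, e4 in A, B. split; assumption.
Qed.
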